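(* Let $C$ be an $E$-linear code of length $2n$. Then: (1) if $C$ is free, $(C^{\perp_{S_L}})^{\perp_{S_L}}=C$; (2) if $C_{Res}=\{0\}$ and $C_{Tor}=\mathbb{F}_2^{2n}$, $(C^{\perp_{S_R}})^{\perp_{S_R}}=C$; (3) $(C^{\perp_S})^{\perp_S}=C$.
   Context: $E=\langle \kappa,\tau \mid 2\kappa=2\tau=0,\ \kappa^2=\kappa,\ \tau^2=\tau,\ \kappa\tau=\kappa,\ \tau\kappa=\tau\rangle$ is the non-unital ring $\{0,\kappa,\tau,\zeta\}$, $\zeta=\kappa+\tau$, with $e\kappa=e\tau=e$, $e\zeta=0$ for all $e\in E$. Every $e\in E$ is uniquely $u\kappa+v\zeta$ ($u,v\in\mathbb{F}_2$); $\pi(u\kappa+v\zeta)=u$, componentwise. An $E$-linear code of length $2n$ is a left $E$-submodule $C\subseteq E^{2n}$; $C_{Res}=\pi(C)$, $C_{Tor}=\{v\in\mathbb{F}_2^{2n}:\zeta v\in C\}$ (componentwise, $0\cdot\zeta=0,1\cdot\zeta=\zeta$); $C$ is free if $C_{Res}=C_{Tor}$. Symplectic inner product: $\langle (u|v),(u'|v')\rangle_s=\sum_i u_iv'_i+\sum_i v_iu'_i$. $C^{\perp_{S_L}}=\{z\in E^{2n}:\langle z,w\rangle_s=0\ \forall w\in C\}$, $C^{\perp_{S_R}}=\{z\in E^{2n}:\langle w,z\rangle_s=0\ \forall w\in C\}$, $C^{\perp_S}=C^{\perp_{S_L}}\cap C^{\perp_{S_R}}$ (all again $E$-linear codes). 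*)

(* Defs.v *)
From mathcomp Require Import all_boot.
Set Implicit Arguments. Unset Strict Implicit. Unset Printing Implicit Defensive.

(* The non-unital ring E = {0, kappa, tau, zeta}.  An element u*kappa + v*zeta
   (u, v in F_2) is represented by the pair (u, v). *)
Definition E : finType := (bool * bool)%type.

Definition E0 : E := (false, false).
Definition kappa : E := (true, false).
Definition zeta : E := (false, true).
Definition tau : E := (true, true).

Definition Eadd (a b : E) : E := (addb a.1 b.1, addb a.2 b.2).
(* e * kappa = e * tau = e, e * zeta = e * 0 = 0: multiplication by b
   depends only on pi(b). *)
Definition Emul (a b : E) : E := if b.1 then a else E0.

Definition Epi (a : E) : bool := a.1.

Lemma E_relations :
  Eadd kappa kappa = E0 /\ Eadd tau tau = E0 /\ Emul kappa kappa = kappa /\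
  Emul tau tau = tau /\ Emul kappa tau = kappa /\ Emul tau kappa = tau /\
  Eadd kappa tau = zeta.
Proof. by do !split. Qed.

(* Words of length 2n, written (u | v) with u on indices lshift, v on rshift. *)
Definition Ewords (n : nat) : finType := {ffun 'I_(n + n) -> E}.
Definition Fwords (n : nat) : finType := {ffun 'I_(n + n) -> bool}.

Definition Ezero_word n : Ewords n := [ffun => E0].
Definition Eadd_word n (x y : Ewords n) : Ewords n := [ffun i => Eadd (x i) (y i)].
Definition Escale n (e : E) (x : Ewords n) : Ewords n := [ffun i => Emul e (x i)].

Definition E_linear n (C : {set Ewords n}) : Prop :=
  [/\ Ezero_word n \in C,
      (forall x y, x \in C -> y \in C -> Eadd_word x y \in C) &
      (forall e x, x \in C -> Escale e x \in C)].

Definition C_Res n (C : {set Ewords n}) : {set Fwords n} :=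
  [set ([ffun i => Epi (c i)] : Fwords n) | c : Ewords n in C].

Definition zeta_word n (v : Fwords n) : Ewords n :=
  [ffun i => if v i then zeta else E0].

Definition C_Tor n (C : {set Ewords n}) : {set Fwords n} :=
  [set v | zeta_word v \in C].

Definition free_code n (C : {set Ewords n}) : Prop := C_Res C = C_Tor C.

Definition symp n (x y : Ewords n) : E :=
  \big[Eadd/E0]_(i < n)
     Eadd (Emul (x (lshift n i)) (y (rshift n i)))
          (Emul (x (rshift n i)) (y (lshift n i))).

Definition perpSL n (C : {set Ewords n}) : {set Ewords n} :=
  [set z | [forall w in C, symp z w == E0]].
Definition perpSR n (C : {set Ewords n}) : {set Ewords n} :=
  [set z | [forall w in C, symp w z == E0]].
Definition perpS n (C : {set Ewords n}) : {set Ewords n} :=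
  perpSL C :&: perpSR C.

(* Main.v *)
Require Import Defs.
From mathcomp Require Import all_boot all_algebra.
Set Implicit Arguments. Unset Strict Implicit. Unset Printing Implicit Defensive.
Import GRing.Theory.

Definition fs n (x y : Fwords n) : bool :=
  \big[addb/false]_(i < n) ((x (lshift n i) && y (rshift n i)) (+) (x (rshift n i) && y (lshift n i))).

Definition sw n (i : 'I_(n + n)) : 'I_(n + n) :=
  match split i with inl a => rshift n a | inr b => lshift n b end.

Lemma sw_l n (i : 'I_n) : sw (lshift n i) = rshift n i.
Proof. by rewrite /sw (unsplitK (inl i)). Qed.
Lemma sw_r n (i : 'I_n) : sw (rshift n i) = lshift n i.
Proof. by rewrite /sw (unsplitK (inr i)). Qed.
Lemma swK n : involutive (@sw n).
Proof. move=> i; rewrite -(splitK i); case: (split i) => a; rewrite /unsplit; by rewrite ?sw_l ?sw_r ?sw_l. Qed.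

Local Open Scope ring_scope.
Lemma F2cases (a : 'F_2) : a = 0 \/ a = 1.
Proof. case: a => [[|[|k]]] H; [left|right|by []]; by apply/val_inj. Qed.
Lemma F2addb (a b : bool) : ((a (+) b)%:R : 'F_2) = a%:R + b%:R.
Proof. by case: a; case: b => //=; rewrite ?addr0 ?add0r //; apply/val_inj. Qed.
Lemma F2andb (a b : bool) : ((a && b)%:R : 'F_2) = a%:R * b%:R.
Proof. by case: a; case: b => //=; rewrite ?mulr0 ?mul0r ?mulr1. Qed.
Lemma F2neq0 (b : bool) : (((b%:R : 'F_2)) != 0) = b.
Proof. by case: b; rewrite ?oner_neq0 ?eqxx. Qed.
Lemma F2addneq (a b : 'F_2) : (a + b != 0) = (a != 0) (+) (b != 0).
Proof. by case: (F2cases a) => ->; case: (F2cases b) => ->; rewrite ?addr0 ?add0r ?eqxx ?oner_neq0 //; apply/negbTE; rewrite negbK; apply/eqP/val_inj. Qed.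

Definition phi n (x : Fwords n) : 'rV['F_2]_(n + n) := \row_i (x i)%:R.
Definition psi n (v : 'rV['F_2]_(n + n)) : Fwords n := [ffun i => v 0 i != 0].
Lemma phiK n : cancel (@phi n) (@psi n).
Proof. by move=> x; apply/ffunP => i; rewrite !ffunE mxE F2neq0. Qed.
Lemma psiK n : cancel (@psi n) (@phi n).
Proof.
move=> v; apply/rowP => i; rewrite !mxE ffunE.
by case: (F2cases (v 0 i)) => ->; rewrite ?eqxx ?oner_neq0.
Qed.

Definition Bm n : 'M['F_2]_(n + n) := \matrix_(i, j) (j == sw i)%:R.
Lemma BmT n : (Bm n)^T = Bm n.
Proof. apply/matrixP => i j; rewrite !mxE; congr (_%:R).
by rewrite eq_sym (can2_eq (@swK n) (@swK n)). Qed.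
Lemma BmBm n : Bm n *m Bm n = 1%:M.
Proof.
apply/matrixP => i j; rewrite !mxE (bigD1 (sw i)) //= big1 ?addr0.
  by rewrite !mxE eqxx swK mul1r eq_sym.
by move=> k /negbTE hk; rewrite !mxE hk mul0r.
Qed.

Lemma form n (x y : Fwords n) :
  (phi x *m Bm n *m (phi y)^T) 0 0 = (fs x y)%:R.
Proof.
rewrite !mxE.
have H j : (phi x *m Bm n) 0 j = (x (sw j))%:R.
  rewrite !mxE (bigD1 (sw j)) //= big1 ?addr0.
    by rewrite !mxE swK eqxx mulr1.
  move=> k hk; rewrite !mxE; case: eqP => [e|]; last by rewrite mulr0.
  by case/eqP: hk; rewrite e swK.
under eq_bigr => j _ do rewrite H !mxE.
rewrite big_split_ord /= /fs.
rewrite (big_morph (fun b : bool => (b%:R : 'F_2)) F2addb (erefl _)) -big_split /=.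
apply: eq_bigr => i _; rewrite F2addb !F2andb sw_l sw_r addrC.
by rewrite (mulrC (x (lshift n i))%:R) (mulrC (x (rshift n i))%:R).
Qed.
Section MX.
Variables (F : fieldType) (m : nat) (B : 'M[F]_m).
Hypotheses (BT : B^T = B) (BB : B *m B = 1%:M).
Definition Dmx k (A : 'M[F]_(k, m)) : 'M[F]_m := kermx (B *m A^T).

Lemma rank_Dmx k (A : 'M[F]_(k, m)) : \rank (Dmx A) = (m - \rank A)%N.
Proof.
rewrite /Dmx mxrank_ker; congr (_ - _)%N.
rewrite -(mxrank_tr A); apply/eqP; rewrite eqn_leq mxrankM_maxr /=.
by rewrite -{1}[A^T]mul1mx -BB -mulmxA mxrankM_maxr.
Qed.

Lemma DDmx k (A : 'M[F]_(k, m)) : (Dmx (Dmx A) <= A)%MS.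
Proof.
have sA : (A <= Dmx (Dmx A))%MS.
  rewrite {2}/Dmx sub_kermx; apply/eqP.
  have H := mulmx_ker (B *m A^T); rewrite -/(Dmx A) in H.
  by apply: trmx_inj; rewrite -/(Dmx A) trmx_mul trmx_mul trmxK BT trmx0 -mulmxA.
rewrite -(mxrank_leqif_sup sA).2 !rank_Dmx subKn ?rank_leq_col //.
Qed.
End MX.

Definition fzero n : Fwords n := [ffun => false].
Definition fxor n (x y : Fwords n) : Fwords n := [ffun i => x i (+) y i].
Definition subsp n (S : {set Fwords n}) :=
  fzero n \in S /\ forall x y, x \in S -> y \in S -> fxor x y \in S.
Definition Ds n (S : {set Fwords n}) : {set Fwords n} :=
  [set x | [forall y in S, ~~ fs x y]].

Lemma fsC n (x y : Fwords n) : fs x y = fs y x.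
Proof. by apply: eq_bigr => i _; rewrite addbC (andbC (x _)) (andbC (x _)). Qed.

Lemma psi0 n : psi (0 : 'rV_(n + n)) = fzero n.
Proof. by apply/ffunP => i; rewrite !ffunE mxE eqxx. Qed.
Lemma psiD n (a b : 'rV_(n + n)) : psi (a + b) = fxor (psi a) (psi b).
Proof. by apply/ffunP => i; rewrite !ffunE mxE F2addneq. Qed.

Lemma entry_row p m (X : 'rV['F_2]_m) (M : 'M['F_2]_(p, m)) k :
  (X *m M^T) 0 k = (X *m (row k M)^T) 0 0.
Proof. by rewrite !mxE; apply: eq_bigr => j _; rewrite !mxE. Qed.

Lemma DsDs n (S : {set Fwords n}) : subsp S -> Ds (Ds S) = S.
Proof.
move=> [S0 SD]; apply/setP => z; apply/idP/idP; last first.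
  move=> zS; rewrite inE; apply/forall_inP => x; rewrite inE => /forall_inP/(_ z zS).
  by rewrite fsC.
rewrite inE => /forall_inP Hz.
pose M := \matrix_(k < #|S|) phi (enum_val k).
have HD (w : 'rV_(n + n)) : (w <= Dmx (Bm n) M)%MS -> psi w \in Ds S.
  rewrite sub_kermx => /eqP Hw; rewrite inE; apply/forall_inP => y yS.
  move/rowP/(_ (enum_rank_in yS y)): Hw.
  rewrite mulmxA entry_row rowK enum_rankK_in // -(psiK w) form mxE phiK.
  by move=> H; rewrite -(F2neq0 (fs _ _)) H eqxx.
have : (phi z <= Dmx (Bm n) (Dmx (Bm n) M))%MS.
  rewrite sub_kermx; apply/eqP/rowP => j.
  rewrite mulmxA entry_row -(psiK (row j _)) form mxE.
  have := Hz _ (HD _ (row_sub j _)); by case: (fs _ _).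
move=> H; have := submx_trans H (DDmx (@BmT n) (@BmBm n) M).
case/submxP => u Hu.
rewrite -(phiK z) Hu mulmx_sum_row.
apply: (big_ind (fun v => psi v \in S)).
- by rewrite psi0.
- by move=> a b Ha Hb; rewrite psiD SD.
move=> k _; case: (F2cases (u 0 k)) => ->; first by rewrite scale0r psi0.
by rewrite scale1r rowK phiK enum_valP.
Qed.

Local Close Scope ring_scope.

Section Codes.
Variable n : nat.
Implicit Types (A B S : {set Fwords n}) (C : {set Ewords n}).

Definition pi1 (z : Ewords n) : Fwords n := [ffun i => Epi (z i)].
Definition pi2 (z : Ewords n) : Fwords n := [ffun i => (z i).2].
Definition mkw (a b : Fwords n) : Ewords n := [ffun i => (a i, b i)].
Definition Prod A B : {set Ewords n} := [set z | (pi1 z \in A) && (pi2 z \in B)].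

Lemma pi1_mkw a b : pi1 (mkw a b) = a.
Proof. by apply/ffunP => i; rewrite !ffunE. Qed.
Lemma pi2_mkw a b : pi2 (mkw a b) = b.
Proof. by apply/ffunP => i; rewrite !ffunE. Qed.

Lemma symp_eq x y : symp x y = (fs (pi1 x) (pi1 y), fs (pi2 x) (pi1 y)).
Proof.
rewrite [LHS]surjective_pairing /symp; congr pair.
  rewrite (big_morph (fun p : E => p.1) (id1 := false) (op1 := addb)) //.
  apply: eq_bigr => i _; rewrite !ffunE /Emul.
  by case: (y (rshift n i)) => [[] ?]; case: (y (lshift n i)) => [[] ?]; rewrite /= ?andbT ?andbF.
rewrite (big_morph (fun p : E => p.2) (id1 := false) (op1 := addb)) //.
apply: eq_bigr => i _; rewrite !ffunE /Emul.
by case: (y (rshift n i)) => [[] ?]; case: (y (lshift n i)) => [[] ?]; rewrite /= ?andbT ?andbF.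
Qed.

Lemma sympE0 x y : (symp x y == E0) = ~~ fs (pi1 x) (pi1 y) && ~~ fs (pi2 x) (pi1 y).
Proof. by rewrite symp_eq; case: (fs _ _); case: (fs _ _). Qed.

Lemma fs0l y : fs (fzero n) y = false.
Proof. by rewrite /fs big1 // => i _; rewrite !ffunE. Qed.

Lemma Ds0 S : fzero n \in Ds S.
Proof. by rewrite inE; apply/forall_inP => y _; rewrite fs0l. Qed.

Lemma Ds_anti A B : A \subset B -> Ds B \subset Ds A.
Proof.
move=> /subsetP sAB; apply/subsetP => x; rewrite !inE => /forall_inP H.
by apply/forall_inP => y /sAB /H.
Qed.

Lemma Ds_zero : Ds [set fzero n] = setT.
Proof.
apply/setP => x; rewrite !inE; apply/forall_inP => y; rewrite inE => /eqP ->.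
by rewrite fsC fs0l.
Qed.

Lemma subsp_zero : subsp [set fzero n].
Proof.
split; first by rewrite inE.
move=> x y; rewrite !inE => /eqP -> /eqP ->; apply/eqP/ffunP => i; by rewrite !ffunE.
Qed.

Lemma perpSL_Prod A B : fzero n \in B -> perpSL (Prod A B) = Prod (Ds A) (Ds A).
Proof.
move=> B0; apply/setP => z; rewrite !inE; apply/forall_inP/andP.
  move=> H; split; apply/forall_inP => y yA;
    (have := H (mkw y (fzero n)); rewrite inE pi1_mkw pi2_mkw yA B0 => /(_ isT));
    by rewrite sympE0 pi1_mkw => /andP[].
case => /forall_inP H1 /forall_inP H2 w; rewrite inE => /andP[wA _].
by rewrite sympE0 H1 ?H2.
Qed.

Lemma perpSR_Prod A B : fzero n \in A -> fzero n \in B ->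
  perpSR (Prod A B) = Prod (Ds A :&: Ds B) setT.
Proof.
move=> A0 B0; apply/setP => z; rewrite !inE andbT; apply/forall_inP/andP.
  move=> H; split; apply/forall_inP => y yA.
    have := H (mkw y (fzero n)); rewrite inE pi1_mkw pi2_mkw yA B0 => /(_ isT).
    by rewrite sympE0 pi1_mkw fsC => /andP[].
  have := H (mkw (fzero n) y); rewrite inE pi1_mkw pi2_mkw yA A0 => /(_ isT).
  by rewrite sympE0 pi2_mkw => /andP[_]; rewrite fsC.
case => /forall_inP H1 /forall_inP H2 w; rewrite inE => /andP[wA wB].
by rewrite sympE0 fsC H1 // fsC H2.
Qed.

Lemma perpS_Prod A B : fzero n \in A -> fzero n \in B ->
  perpS (Prod A B) = Prod (Ds A :&: Ds B) (Ds A).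
Proof.
move=> A0 B0; rewrite /perpS perpSL_Prod // perpSR_Prod //.
move: (Ds A) (Ds B) => X Y; apply/setP => z; rewrite !inE; by case: (pi1 z \in X); case: (pi1 z \in Y); case: (pi2 z \in X).
Qed.

Lemma code_Prod C : E_linear C -> C = Prod (C_Res C) (C_Tor C).
Proof.
case=> C0 CD CS; apply/setP => z; rewrite !inE; apply/idP/andP.
  move=> zC; split; first by apply/imsetP; exists z.
  have -> : zeta_word (pi2 z) = Eadd_word z (Escale kappa z).
    by apply/ffunP => i; rewrite !ffunE /Emul; case: (z i) => [[] []].
  by apply: CD => //; apply: CS.
case=> /imsetP [c cC Hc]; move=> zT.
have -> : z = Eadd_word (Escale kappa c) (zeta_word (pi2 z)).
  apply/ffunP => i; move/ffunP/(_ i): Hc; rewrite !ffunE /Emul /Epi.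
  by case: (z i) => [[] []]; case: (c i) => [[] []].
by apply: CD => //; apply: CS.
Qed.

Lemma Res_subsp C : E_linear C -> subsp (C_Res C).
Proof.
case=> C0 CD CS; split.
  apply/imsetP; exists (Ezero_word n) => //; by apply/ffunP => i; rewrite !ffunE.
move=> x y /imsetP [c cC ->] /imsetP [d dC ->]; apply/imsetP; exists (Eadd_word c d).
  by apply: CD.
by apply/ffunP => i; rewrite !ffunE.
Qed.

Lemma Tor_subsp C : E_linear C -> subsp (C_Tor C).
Proof.
case=> C0 CD CS; split.
  rewrite inE; suff -> : zeta_word (fzero n) = Ezero_word n by [].
  by apply/ffunP => i; rewrite !ffunE.
move=> x y; rewrite !inE => xT yT.
suff -> : zeta_word (fxor x y) = Eadd_word (zeta_word x) (zeta_word y) by apply: CD.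
by apply/ffunP => i; rewrite !ffunE; case: (x i); case: (y i).
Qed.

Lemma Res_Tor C : E_linear C -> C_Res C \subset C_Tor C.
Proof.
case=> C0 CD CS; apply/subsetP => x /imsetP [c cC ->]; rewrite inE.
suff -> : zeta_word [ffun i => Epi (c i)] = Escale zeta c by apply: CS.
by apply/ffunP => i; rewrite !ffunE /Emul /Epi; case: (c i) => [[] ?].
Qed.
End Codes.

Theorem mainTheorem9 (n : nat) (C : {set Ewords n}) :
  E_linear C ->
  [/\ (free_code C -> perpSL (perpSL C) = C),
      (C_Res C = [set [ffun => false]] -> C_Tor C = setT ->
         perpSR (perpSR C) = C)
    & perpS (perpS C) = C].
Proof.
move=> HC; have HP := code_Prod HC.
have [R0 RD] := Res_subsp HC; have [T0 TD] := Tor_subsp HC.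
have RT := Res_Tor HC.
split.
- rewrite /free_code => Hf; rewrite HP -Hf perpSL_Prod // perpSL_Prod ?Ds0 //.
  by rewrite DsDs //; apply: Res_subsp.
- move=> HR HT.
  have E1 : perpSR C = C.
    rewrite {1}HP HR HT -/(fzero n) perpSR_Prod ?inE //.
    have DT : Ds [set: Fwords n] = [set fzero n].
      by rewrite -Ds_zero DsDs //; exact: subsp_zero.
    by rewrite Ds_zero DT setTI HP HR HT.
  by rewrite !E1.
- rewrite HP perpS_Prod // perpS_Prod ?in_setI ?Ds0 //.
  have -> : Ds (C_Res C) :&: Ds (C_Tor C) = Ds (C_Tor C).
    by apply/setIidPr; apply: Ds_anti.
  rewrite !DsDs; try (apply: Res_subsp || apply: Tor_subsp); try done.
  by rewrite (setIidPr RT).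
Qed.
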